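(* Let $\mathbf u$ be an aperiodic infinite word over a finite alphabet whose language is closed under reversal. Then the following are equivalent: (1) there exists $H\in\mathbb N$ such that for every prefix $w$ of $\mathbf u$ with $|w|\ge H$, the longest palindromic suffix of $w$ occurs in $w$ exactly once; (2) there exists $N\in\mathbb N$ such that for every factor $w$ of $\mathbf u$ with $|w|\ge N$, every factor $v$ of $\mathbf u$ with $|v|>|w|$ which begins with $w$ or $\overline w$, ends with $w$ or $\overline w$, and contains no other occurrences of $w$ or $\overline w$ (i.e. $w,\overline w$ occur in $v$ only as its prefix and as its suffix), is a palindrome.
   Context: An infinite word is aperiodic if it is not eventually periodic. For a finite word $w=w_0\cdots w_{n-1}$ its reversal is $\overline{w}=w_{n-1}\cdots w_0$; $w$ is a palindrome if $w=\overline{w}$ (the empty word is a palindrome). The language of $\mathbf u$ is closed under reversal if the reversal of every factor of $\mathbf u$ is again a factor of $\mathbf u$. *)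

(* Defs.v *)
From mathcomp Require Import all_boot.
Set Implicit Arguments. Unset Strict Implicit. Unset Printing Implicit Defensive.

Section Words.
Variable A : finType.

Definition subword (u : nat -> A) (i n : nat) : seq A := [seq u (i + k) | k <- iota 0 n].

Definition uprefix (u : nat -> A) (n : nat) : seq A := subword u 0 n.

Definition is_factor (u : nat -> A) (w : seq A) : Prop := exists i, w = subword u i (size w).

Definition eventually_periodic (u : nat -> A) : Prop :=
  exists p n0, 0 < p /\ forall n, n0 <= n -> u (n + p) = u n.

Definition aperiodic (u : nat -> A) : Prop := ~ eventually_periodic u.

Definition closed_under_reversal (u : nat -> A) : Prop :=
  forall w, is_factor u w -> is_factor u (rev w).

Definition palindrome (w : seq A) : bool := w == rev w.

Definition occurs_at (s w : seq A) (i : nat) : bool :=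
  (i + size s <= size w) && (take (size s) (drop i w) == s).

Definition occ (s w : seq A) : nat := count (occurs_at s w) (iota 0 (size w).+1).

(* longest palindromic suffix: drop the fewest letters so that the rest is a
   palindrome (the empty suffix is a palindrome, so this is well defined) *)
Definition lps (w : seq A) : seq A :=
  drop (find (fun i => palindrome (drop i w)) (iota 0 (size w).+1)) w.

End Words.

(* Main.v *)
Require Import Defs.
From mathcomp Require Import all_boot zify.
From Stdlib Require Import Classical.
Set Implicit Arguments. Unset Strict Implicit. Unset Printing Implicit Defensive.

Section S.
Variable A : finType.
Variable u : nat -> A.

Lemma size_sw a m : size (subword u a m) = m.
Proof. by rewrite /subword size_map size_iota. Qed.

Lemma nth_sw x0 a m k : k < m -> nth x0 (subword u a m) k = u (a + k).
Proof. by move=> km; rewrite /subword (nth_map 0) ?size_iota // nth_iota. Qed.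

Lemma drop_sw t a m : drop t (subword u a m) = subword u (a + t) (m - t).
Proof.
apply: (@eq_from_nth _ (u 0)); first by rewrite size_drop !size_sw.
move=> k; rewrite size_drop size_sw => km.
rewrite nth_drop nth_sw; last lia.
rewrite nth_sw; last lia.
by rewrite addnA.
Qed.

Lemma take_sw c a m : c <= m -> take c (subword u a m) = subword u a c.
Proof.
move=> cm; apply: (@eq_from_nth _ (u 0)); first by rewrite size_takel ?size_sw.
move=> k; rewrite size_takel ?size_sw // => kc.
rewrite nth_take // !nth_sw //; lia.
Qed.

Lemma occ_sw (s : seq A) a m t : occurs_at s (subword u a m) t =
  (t + size s <= m) && (subword u (a + t) (size s) == s).
Proof.
rewrite /occurs_at size_sw; case h: (t + size s <= m) => //=.
rewrite drop_sw take_sw //; lia.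
Qed.

Lemma lpsP (w : seq A) : exists k, [/\ k <= size w, lps w = drop k w,
  palindrome (drop k w) & forall j, j <= size w -> palindrome (drop j w) -> k <= j].
Proof.
set P := fun i => palindrome (drop i w).
have hh : has P (iota 0 (size w).+1).
  apply/hasP; exists (size w); first by rewrite mem_iota; lia.
  by rewrite /P drop_size.
exists (find P (iota 0 (size w).+1)); split => //.
- by move: hh; rewrite has_find size_iota ltnS.
- have := nth_find 0 hh; rewrite nth_iota ?add0n //.
  by move: hh; rewrite has_find size_iota.
- move=> j hj hp; rewrite leqNgt; apply/negP => hlt.
  have := before_find 0 hlt; rewrite nth_iota ?add0n; last lia.
  by rewrite /P hp.
Qed.

Lemma occ1 (s x : seq A) t1 t2 : occ s x = 1 -> occurs_at s x t1 -> occurs_at s x t2 -> t1 = t2.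
Proof.
move=> h o1 o2; case: (eqVneq t1 t2) => // ne; exfalso.
have b: forall t, occurs_at s x t -> t \in filter (occurs_at s x) (iota 0 (size x).+1).
  move=> t o; rewrite mem_filter o mem_iota /=.
  move: o; rewrite /occurs_at => /andP [hh _]; lia.
have: size [:: t1; t2] <= size (filter (occurs_at s x) (iota 0 (size x).+1)).
  apply: uniq_leq_size; first by rewrite /= inE ne.
  by move=> y; rewrite !inE => /orP [] /eqP ->; apply: b.
rewrite size_filter => h2; move: h; rewrite /occ => h; by rewrite h in h2.
Qed.

Lemma occ_one (s x : seq A) k : occurs_at s x k -> (forall t, occurs_at s x t -> t = k) -> occ s x = 1.
Proof.
move=> hk hu; rewrite /occ (@eq_in_count _ _ (pred1 k)).
  rewrite count_uniq_mem ?iota_uniq // mem_iota /=.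
  move: hk; rewrite /occurs_at => /andP [hh _]; have -> : k < 0 + (size x).+1 by lia. by [].
move=> t _ /=; apply/idP/eqP => [/hu // | ->] //.
Qed.


Definition ow (w x : seq A) t := occurs_at w x t || occurs_at (rev w) x t.
Definition cret (w x : seq A) := [/\ ow w x 0, ow w x (size x - size w) &
   forall t, ow w x t -> t = 0 \/ t = size x - size w].

Lemma ow_sw (w : seq A) a m t : ow w (subword u a m) t =
  (t + size w <= m) && ((subword u (a + t) (size w) == w) || (subword u (a + t) (size w) == rev w)).
Proof. by rewrite /ow !occ_sw size_rev; case: (_ <= _). Qed.

Lemma eq_revE (a b : seq A) : (rev a == b) = (a == rev b).
Proof. by apply/idP/idP => /eqP e; apply/eqP; [rewrite -e revK | rewrite e revK]. Qed.

Lemma occ_rev (s x : seq A) t : occurs_at s (rev x) t =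
  (t + size s <= size x) && occurs_at (rev s) x (size x - size s - t).
Proof.
rewrite /occurs_at !size_rev; case h: (t + size s <= size x) => //=.
have -> : size x - size s - t + size s <= size x by lia.
rewrite /= drop_rev take_rev size_takel ?leq_subr //.
rewrite take_drop.
have -> : size s + (size x - size s - t) = size x - t by lia.
have -> : size x - t - size s = size x - size s - t by lia.
by rewrite eq_revE.
Qed.

Lemma ow_rev (w x : seq A) t : ow w (rev x) t =
  (t + size w <= size x) && ow w x (size x - size w - t).
Proof. by rewrite /ow !occ_rev revK size_rev; case: (_ <= _) => //=; rewrite orbC. Qed.

Lemma cret_rev (w x : seq A) : size w <= size x -> cret w x -> cret w (rev x).
Proof.
move=> hs [h0 hE hO]; split; rewrite ?size_rev.
- by rewrite ow_rev add0n hs subn0.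
- by rewrite ow_rev subnK // subnn leqnn h0.
- move=> t; rewrite ow_rev => /andP [ht /hO]; lia.
Qed.

Lemma occP (s : seq A) n t : t + size s <= n -> subword u t (size s) = s ->
  occurs_at s (subword u 0 n) t.
Proof. by move=> h1 h2; rewrite occ_sw h1 add0n h2 eqxx. Qed.

Lemma main12 H (hH : forall n, H <= n -> occ (lps (uprefix u n)) (uprefix u n) = 1) :
  forall n i w, H <= size w -> size w < n - i -> cret w (subword u i (n - i)) ->
  palindrome (subword u i (n - i)).
Proof.
elim/ltn_ind => n IH i w hw hwn hc.
have hn : H <= n by lia.
have ho := hH n hn.
have [k [kn hl hpal hmin]] := lpsP (uprefix u n).
rewrite /uprefix size_sw in kn.
have hmin' : forall j, j <= n -> palindrome (subword u j (n - j)) -> k <= j.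
  by move=> j hj hp; apply: hmin; rewrite /uprefix ?size_sw // drop_sw add0n.
move: hpal; rewrite /uprefix drop_sw add0n => hpal.
move: ho; rewrite hl /uprefix drop_sw add0n => ho.
set K := size w in hw hwn hc *.
case: (hc) => h0 hE hO.
rewrite size_sw in hE hO.
move: h0; rewrite ow_sw addn0 => /andP [_ hg1].
move: hE; rewrite ow_sw => /andP [_].
have -> : i + (n - i - K) = n - K by lia.
move=> hg2.
have hrel : subword u i K = subword u (n - K) K \/ subword u i K = rev (subword u (n - K) K).
  by case/orP: hg1 => /eqP ->; case/orP: hg2 => /eqP ->; rewrite ?revK; auto.
have hL : rev (subword u k (n - k)) = subword u k (n - k) by move/eqP: hpal.
case: (ltngtP k i) => hki.
-
  have er : drop (i - k) (subword u k (n - k)) = subword u i (n - i).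
    by rewrite drop_sw; congr subword; lia.
  have er2 : rev (subword u i (n - i)) = subword u k (n - i).
    rewrite -er.
    have -> : i - k = size (subword u k (n - k)) - (n - i) by rewrite size_sw; lia.
    by rewrite -take_rev hL take_sw //; lia.
  have hlt : k + (n - i) < n by lia.
  have hwn' : K < k + (n - i) - k by lia.
  have hc' : cret w (subword u k (k + (n - i) - k)).
    rewrite addKn -er2; apply: cret_rev => //; rewrite size_sw; lia.
  have := IH _ hlt k w hw hwn' hc'.
  rewrite addKn -er2 => hp.
  by move: hp; rewrite /palindrome revK eq_sym.
-
  case: (leqP (n - k) K) => hl2.
  + have eL : drop (K - (n - k)) (subword u (n - K) K) = subword u k (n - k).
      by rewrite drop_sw; congr subword; lia.
    case: hrel => e.
    * have o1 : occurs_at (subword u k (n - k)) (subword u 0 n) (i + (K - (n - k))).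
        apply: occP; rewrite ?size_sw; first lia.
        by rewrite -eL -e drop_sw; congr subword; lia.
      have o2 : occurs_at (subword u k (n - k)) (subword u 0 n) k.
        by apply: occP; rewrite ?size_sw //; lia.
      have := occ1 ho o1 o2; lia.
    * have o1 : occurs_at (subword u k (n - k)) (subword u 0 n) i.
        apply: occP; rewrite ?size_sw; first lia.
        by rewrite -(@take_sw (n - k) i K) // e take_rev size_sw eL hL.
      have o2 : occurs_at (subword u k (n - k)) (subword u 0 n) k.
        by apply: occP; rewrite ?size_sw //; lia.
      have := occ1 ho o1 o2; lia.
  + have eg : drop ((n - k) - K) (subword u k (n - k)) = subword u (n - K) K.
      by rewrite drop_sw; congr subword; lia.
    have eg2 : rev (subword u (n - K) K) = subword u k K.
      rewrite -eg; have -> : (n - k) - K = size (subword u k (n - k)) - K by rewrite size_sw.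
      rewrite -take_rev hL take_sw //; lia.
    have : ow w (subword u i (n - i)) (k - i).
      rewrite ow_sw.
      have -> : i + (k - i) = k by lia.
      rewrite -eg2.
      apply/andP; split; first lia.
      by case/orP: hg2 => /eqP ->; rewrite ?revK eqxx ?orbT.
    move/hO; lia.
- by subst k.
Qed.

Lemma fin_first N : exists B, forall i, exists2 j, j <= B & subword u j N = subword u i N.
Proof.
have gen : forall s : seq (seq A), exists B, forall x, x \in s ->
    (exists i, subword u i N = x) -> exists2 j, j <= B & subword u j N = x.
  elim => [|x s [B IH]]; first by exists 0.
  case: (classic (exists i, subword u i N = x)) => [[i0 hi0]|hn].
  - exists (maxn B i0) => y; rewrite inE => /orP [/eqP -> _|hy hf].
      by exists i0 => //; rewrite leq_maxr.
    have [j hj hj2] := IH y hy hf; exists j => //; by rewrite (leq_trans hj) // leq_maxl.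
  - exists B; move=> y; rewrite inE => /orP [/eqP -> hf|hy hf]; first by case: (hn hf).
    exact: IH.
have [B hB] := gen [seq tval t | t <- enum {: N.-tuple A}].
exists B => i.
have hx : size (subword u i N) == N by rewrite size_sw.
apply: hB; last by exists i.
have -> : subword u i N = tval (Tuple hx) by [].
by apply: map_f; rewrite mem_enum.
Qed.

Lemma dir21 N (HN : forall w v : seq A,
      is_factor u w -> N <= size w ->
      is_factor u v -> size w < size v ->
      (occurs_at w v 0 || occurs_at (rev w) v 0) ->
      (occurs_at w v (size v - size w) || occurs_at (rev w) v (size v - size w)) ->
      (forall i, (occurs_at w v i || occurs_at (rev w) v i) ->
                 i = 0 \/ i = size v - size w) ->
      palindrome v) :
  exists H : nat, forall n, H <= n -> occ (lps (uprefix u n)) (uprefix u n) = 1.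
Proof.
have [B hB] := fin_first N.
exists (B + N + 1) => n hn.
set a := n - N.
set w := subword u a N.
have [j0 hj0 ej0] := hB a.
pose P := fun j => (j < a) && ((subword u j N == w) || (subword u j N == rev w)).
have exP : exists j, P j by exists j0; rewrite /P ej0 eqxx /=; apply/andP; split => //; lia.
have ubP : forall j, P j -> j <= a by move=> j /andP [hj _]; lia.
case: (ex_maxnP exP ubP) => j hPj hjmax.
move: hPj => /andP [hja hjw].
have hv : palindrome (subword u j (n - j)).
  apply: (HN w).
  - by exists a; rewrite /w size_sw.
  - by rewrite /w size_sw.
  - by exists j; rewrite size_sw.
  - rewrite !size_sw; lia.
  - rewrite !occ_sw size_rev !size_sw addn0; apply/orP.
    case/orP: hjw => ->; rewrite ?orbT ?andbT; [left|right]; lia.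
  - rewrite !occ_sw size_rev !size_sw.
    have -> : j + (n - j - N) = a by rewrite /a; lia.
    rewrite eqxx andbT; lia.
  - move=> t; rewrite !occ_sw size_rev !size_sw.
    move=> h; have ht : t + N <= n - j by case/orP: h => /andP [].
    have hw' : (subword u (j + t) N == w) || (subword u (j + t) N == rev w).
      by case/orP: h => /andP [_ ->]; rewrite ?orbT.
    case: (ltnP (j + t) a) => hlt.
      have := hjmax (j + t); rewrite /P hlt hw' => /(_ isT); lia.
    right; rewrite /a in hlt; lia.
have [k [kn hl hpal hmin]] := lpsP (uprefix u n).
rewrite /uprefix size_sw in kn.
have hmin' : forall j, j <= n -> palindrome (subword u j (n - j)) -> k <= j.
  by move=> j' hj hp; apply: hmin; rewrite /uprefix ?size_sw // drop_sw add0n.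
move: hpal; rewrite /uprefix drop_sw add0n => hpal.
rewrite hl /uprefix drop_sw add0n.
have hkj : k <= j by apply: hmin' => //; lia.
set L := subword u k (n - k).
have hL : rev L = L by move/eqP: hpal.
apply: occ_one (k) _ _.
  by apply: occP; rewrite /L ?size_sw //; lia.
move=> t; rewrite occ_sw /L size_sw add0n => /andP [ht et].
case: (ltngtP t k) => // htk; last by lia.
pose Q := fun t => (t < k) && (subword u t (n - k) == L).
have exQ : exists t, Q t by exists t; rewrite /Q htk et.
have ubQ : forall t, Q t -> t <= k by move=> t' /andP [h _]; lia.
case: (ex_maxnP exQ ubQ) => t' /andP [ht' et'] htmax.
have : palindrome (subword u t' (n - t')).
  apply: (HN L).
  - by exists k; rewrite /L size_sw.
  - rewrite /L size_sw; lia.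
  - by exists t'; rewrite size_sw.
  - rewrite /L !size_sw; lia.
  - rewrite occ_sw /L size_sw addn0 et' andbT; lia.
  - rewrite occ_sw /L !size_sw.
    have -> : t' + (n - t' - (n - k)) = k by lia.
    rewrite eqxx andbT; lia.
  - move=> s; rewrite hL orbb occ_sw /L !size_sw => /andP [hs es].
    case: (ltnP (t' + s) k) => hlt.
      have := htmax (t' + s); rewrite /Q hlt es => /(_ isT); lia.
    right; lia.
move/hmin' => /(_ _); lia.
Qed.

End S.

Theorem lemma14 (A : finType) (u : nat -> A) :
  aperiodic u -> closed_under_reversal u ->
  ((exists H : nat, forall n, H <= n -> occ (lps (uprefix u n)) (uprefix u n) = 1)
   <->
   (exists N : nat, forall w v : seq A,
      is_factor u w -> N <= size w ->
      is_factor u v -> size w < size v ->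
      (occurs_at w v 0 || occurs_at (rev w) v 0) ->
      (occurs_at w v (size v - size w) || occurs_at (rev w) v (size v - size w)) ->
      (forall i, (occurs_at w v i || occurs_at (rev w) v i) ->
                 i = 0 \/ i = size v - size w) ->
      palindrome v)).
Proof.
move=> _ _; split; last by case=> N HN; exact: (@dir21 A u N HN).
case=> H hH; exists H => w v _ hw [i fv] hlt h0 hE hO.
have := @main12 A u H hH (i + size v) i w hw.
rewrite addKn -fv => /(_ hlt); apply; by split.
Qed.
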